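(* For every theory $\Sigma$ and formula $A \Rightarrow B$: $\Sigma \vdash A \Rightarrow B$ if and only if there is a normalized derivation sequence of $A \Rightarrow B$ using formulas in $\Sigma$.
   Context: $Y$ is a non-empty finite set of attributes and $\mathcal{T}_Y = \{y^i \mid y \in Y, i \in \mathbb{Z}\}$; $M + j = \{y^{i+j} \mid y^i \in M\}$. A formula is $A \Rightarrow B$ with $A,B$ finite subsets of $\mathcal{T}_Y$. Deduction rules (for finite $A,B,C,D,E \subseteq \mathcal{T}_Y$, $i \in \mathbb{Z}$): (Ax) infer $A \cup B \Rightarrow A$; (Cut) from $A \Rightarrow B$ and $B \cup C \Rightarrow D$ infer $A \cup C \Rightarrow D$; (Shf) from $A \Rightarrow B$ infer $A+i \Rightarrow B+i$; also (Ref) infer $A \Rightarrow A$; (Acc) from $A \Rightarrow B \cup C$ and $C \Rightarrow D \cup E$ infer $A \Rightarrow B \cup C \cup D$; (Pro) from $A \Rightarrow B \cup C$ infer $A \Rightarrow B$. $\Sigma \vdash A \Rightarrow B$ means there is a finite sequence ending with $A \Rightarrow B$ each member of which is in $\Sigma$ or follows from earlier members by (Ax), (Cut) or (Shf). A normalized derivation sequence of $A \Rightarrow B$ using formulas in $\Sigma$ is a finite sequence of formulas which (1) starts with finitely many formulas in $\Sigma$; (2) continues by formulas obtained by (Shf) applied to formulas in part (1); (3) continues by $A \Rightarrow A$; (4) continues by formulas each obtained by (Acc) whose first hypothesis is the immediately preceding formula and whose second hypothesis is a formula from part (1) or (2); (5) terminates with $A \Rightarrow B$, obtained from the immediately preceding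 formula by (Pro). *)

(* Defs.v *)
From HB Require Import structures.
From mathcomp Require Import all_boot all_order all_algebra.
From mathcomp Require Import finmap.
Set Implicit Arguments. Unset Strict Implicit. Unset Printing Implicit Defensive.
Import GRing.Theory Num.Theory.
Local Open Scope fset_scope.

(* Terms y^i of T_Y are pairs (y, i) with y : Y and i : int. *)
Definition term (Y : finType) := (Y * int)%type.

(* A formula A => B, with A, B finite subsets of T_Y. *)
Definition formula (Y : finType) := ({fset term Y} * {fset term Y})%type.

Definition shift_set (Y : finType) (M : {fset term Y}) (j : int) : {fset term Y} :=
  [fset ((x.1, (x.2 + j)%R) : term Y) | x in M].

Definition rule_Ax (Y : finType) (g : formula Y) : Prop :=
  exists A B : {fset term Y}, g = (A `|` B, A).

Definition rule_Cut (Y : finType) (f1 f2 g : formula Y) : Prop :=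
  exists A B C D : {fset term Y},
    [/\ f1 = (A, B), f2 = (B `|` C, D) & g = (A `|` C, D)].

Definition rule_Shf (Y : finType) (f g : formula Y) : Prop :=
  exists i : int, g = (shift_set f.1 i, shift_set f.2 i).

Definition rule_Acc (Y : finType) (f1 f2 g : formula Y) : Prop :=
  exists A B C D E : {fset term Y},
    [/\ f1 = (A, B `|` C), f2 = (C, D `|` E) & g = (A, B `|` C `|` D)].

Definition rule_Pro (Y : finType) (f g : formula Y) : Prop :=
  exists A B C : {fset term Y}, f = (A, B `|` C) /\ g = (A, B).

Definition theory (Y : finType) := formula Y -> Prop.

Definition is_derivation (Y : finType) (Sigma : theory Y) (s : seq (formula Y)) : Prop :=
  forall k, k < size s ->
    let g := nth (fset0, fset0) s k in
    [\/ Sigma g,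
        rule_Ax g,
        (exists j1 j2, [/\ j1 < k, j2 < k &
            rule_Cut (nth (fset0, fset0) s j1) (nth (fset0, fset0) s j2) g])
      | (exists j, j < k /\ rule_Shf (nth (fset0, fset0) s j) g)].

Definition provable (Y : finType) (Sigma : theory Y) (f : formula Y) : Prop :=
  exists s : seq (formula Y), s != [::] /\ is_derivation Sigma s /\
    last (fset0, fset0) s = f.

(* A normalized derivation sequence of A => B using formulas in Sigma is
   p1 ++ p2 ++ [:: A => A] ++ p4 ++ [:: A => B] with
   (1) p1 in Sigma, (2) p2 obtained by (Shf) from members of p1,
   (3) A => A, (4) p4 each by (Acc) with first hypothesis the immediately
   preceding formula and second hypothesis in p1 ++ p2,
   (5) A => B by (Pro) from the immediately preceding formula. *)
Definition normalized_derivation (Y : finType) (Sigma : theory Y)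
    (p1 p2 p4 : seq (formula Y)) (A B : {fset term Y}) : Prop :=
  [/\ (forall f, f \in p1 -> Sigma f),
      (forall g, g \in p2 -> exists2 f, f \in p1 & rule_Shf f g),
      (forall k, k < size p4 ->
         exists2 h, h \in p1 ++ p2 &
           rule_Acc (nth (A, A) ((A, A) :: p4) k) h (nth (A, A) p4 k))
    & rule_Pro (last (A, A) p4) (A, B)].

Definition has_normalized_derivation (Y : finType) (Sigma : theory Y)
    (A B : {fset term Y}) : Prop :=
  exists p1 p2 p4 : seq (formula Y), normalized_derivation Sigma p1 p2 p4 A B.

(* Main.v *)
Require Import Defs.
From mathcomp Require Import all_boot all_order all_algebra.
From mathcomp Require Import finmap.
From mathcomp Require Import zify.
Set Implicit Arguments. Unset Strict Implicit. Unset Printing Implicit Defensive.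
Local Open Scope fset_scope.

Section S.
Variable Y : finType.
Implicit Types (M X Z : {fset term Y}).

Lemma shiftU M X j : shift_set (M `|` X) j = shift_set M j `|` shift_set X j.
Proof. by rewrite /shift_set imfsetU. Qed.

Lemma shiftS M X j : M `<=` X -> shift_set M j `<=` shift_set X j.
Proof. by move=> /fsetUidPr H; rewrite -H shiftU fsubsetUl. Qed.

Lemma shift_comp M i j : shift_set (shift_set M i) j = shift_set M (i + j)%R.
Proof.
apply/fsetP=> x; apply/imfsetP/imfsetP => /=.
  move=> [y /imfsetP [z /= zM ->] ->]; exists z => //=; by rewrite GRing.addrA.
move=> [z zM ->]; exists (z.1, (z.2 + i)%R); first by apply/imfsetP; exists z.
by rewrite /= GRing.addrA.
Qed.

Inductive reach (H : seq (formula Y)) (S : {fset term Y}) : {fset term Y} -> Prop :=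
| reach0 : reach H S S
| reachS X h : reach H S X -> h \in H -> h.1 `<=` X -> reach H S (X `|` h.2).

Lemma reach_grow H S X : reach H S X -> S `<=` X.
Proof. elim=> // X' h _ IH _ _; exact: fsubset_trans IH (fsubsetUl _ _). Qed.

Lemma reach_monoH H H' S X : {subset H <= H'} -> reach H S X -> reach H' S X.
Proof. move=> sub; elim=> [|X' h _ IH hH hs]; [exact: reach0| apply: reachS => //; exact: sub]. Qed.

Lemma reach_trans H S X Z : reach H S X -> reach H X Z -> reach H S Z.
Proof. move=> h1; elim=> // X' h _ IH hH hs; exact: reachS. Qed.

Lemma reach_monoS H S S' X : reach H S X -> S `<=` S' ->
  exists2 X', reach H S' X' & X `<=` X'.
Proof.
move=> r sS; elim: r => [|X' h _ [X'' r2 s2] hH hs]; first by exists S'; [exact: reach0|].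
exists (X'' `|` h.2); first by apply: reachS => //; exact: fsubset_trans hs s2.
exact: fsetUSS.
Qed.

Lemma reach_shift H S X i : reach H S X ->
  reach [seq (shift_set f.1 i, shift_set f.2 i) | f <- H] (shift_set S i) (shift_set X i).
Proof.
elim=> [|X' h _ IH hH hs]; first exact: reach0.
rewrite shiftU.
have -> : shift_set h.2 i = (shift_set h.1 i, shift_set h.2 i).2 by [].
apply: reachS => //=; first by apply/mapP; exists h.
exact: shiftS.
Qed.

Variable Sigma : theory Y.

Definition good (f : formula Y) := exists p1 p2 : seq (formula Y),
  [/\ (forall f, f \in p1 -> Sigma f),
      (forall g, g \in p2 -> exists2 f, f \in p1 & rule_Shf f g)
    & exists2 X, reach (p1 ++ p2) f.1 X & f.2 `<=` X].

Lemma good_Sigma f : Sigma f -> good f.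
Proof.
move=> Sf; exists [:: f], [::]; split.
- by move=> g; rewrite inE => /eqP ->.
- by [].
exists (f.1 `|` f.2); last exact: fsubsetUr.
apply: reachS; [exact: reach0| by rewrite inE | exact: fsubset_refl].
Qed.

Lemma good_Ax g : rule_Ax g -> good g.
Proof.
move=> [A [B ->]]; exists [::], [::]; split => //.
exists (A `|` B); [exact: reach0| exact: fsubsetUl].
Qed.

Lemma good_Shf f g : good f -> rule_Shf f g -> good g.
Proof.
move=> [p1 [p2 [H1 H2 [X r sub]]]] [i ->].
exists p1, [seq (shift_set h.1 i, shift_set h.2 i) | h <- p1 ++ p2]; split => //.
- move=> g0 /mapP [h]; rewrite mem_cat => /orP [hp1 ->|hp2 ->].
    by exists h => //; exists i.
  have [f0 f0p [j ->]] := H2 h hp2.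
  by exists f0 => //; exists (j + i)%R; rewrite /= !shift_comp.
exists (shift_set X i); last exact: shiftS.
apply: reach_monoH (reach_shift i r) => x xin; by rewrite mem_cat xin orbT.
Qed.

Lemma good_Cut f1 f2 g : good f1 -> good f2 -> rule_Cut f1 f2 g -> good g.
Proof.
move=> [p1 [p2 [H1 H2 [X r sub]]]] [q1 [q2 [K1 K2 [Z r' sub']]]].
move=> [A [B [C [D [e1 e2 ->]]]]]; subst f1 f2 => /=.
exists (p1 ++ q1), (p2 ++ q2); split.
- by move=> f; rewrite mem_cat => /orP [] ?; [apply: H1|apply: K1].
- move=> h; rewrite mem_cat => /orP [] /[dup] hin.
    by move=> /H2 [f fi sh]; exists f => //; rewrite mem_cat fi.
  by move=> /K2 [f fi sh]; exists f => //; rewrite mem_cat fi orbT.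
have subP : {subset p1 ++ p2 <= (p1 ++ q1) ++ (p2 ++ q2)}.
  by move=> x; rewrite !mem_cat => /orP [] ->; rewrite ?orbT.
have subQ : {subset q1 ++ q2 <= (p1 ++ q1) ++ (p2 ++ q2)}.
  by move=> x; rewrite !mem_cat => /orP [] ->; rewrite ?orbT.
simpl in r, sub, r', sub'.
have [X1 r1 s1] := reach_monoS r (fsubsetUl A C).
have g1 := reach_grow r1.
have BC : B `|` C `<=` X1.
  rewrite fsubUset; apply/andP; split; first exact: fsubset_trans sub s1.
  exact: fsubset_trans (fsubsetUr A C) g1.
have [Z1 r2 s2] := reach_monoS r' BC.
exists Z1; last exact: fsubset_trans sub' s2.
apply: reach_trans (reach_monoH subP r1) (reach_monoH subQ r2).
Qed.

End S.

Section T.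
Variable Y : finType.
Variable Sigma : theory Y.
Local Notation x0 := ((fset0, fset0) : formula Y).

Lemma deriv_good s : is_derivation Sigma s ->
  forall k, k < size s -> good Sigma (nth x0 s k).
Proof.
move=> D; elim/ltn_ind => k IH hk.
case: (D k hk) => [Sg|Ax|[j1 [j2 [l1 l2 C]]]|[j [l Sh]]].
- exact: good_Sigma.
- exact: good_Ax.
- apply: good_Cut C; apply: IH => //; exact: ltn_trans hk.
- apply: good_Shf Sh; apply: IH => //; exact: ltn_trans hk.
Qed.

Lemma reach_p4 (H : seq (formula Y)) A X : reach H A X ->
  exists p4 : seq (formula Y),
   (forall k, k < size p4 ->
         exists2 h, h \in H &
           rule_Acc (nth (A, A) ((A, A) :: p4) k) h (nth (A, A) p4 k))
   /\ last (A, A) p4 = (A, X).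
Proof.
elim=> [|X' h _ [p4 [P4 L4]] hH hs]; first by exists [::].
exists (rcons p4 (A, X' `|` h.2)); split; last by rewrite last_rcons.
move=> k; rewrite size_rcons ltnS leq_eqVlt => /orP [/eqP ->|lt].
  rewrite -rcons_cons nth_rcons /= ltnSn nth_rcons ltnn eqxx.
  idtac.
  rewrite -last_nth L4; exists h => //.
  exists A, X', h.1, h.2, fset0; split.
  - by move/fsetUidPl: hs => ->.
  - by rewrite fsetU0; case: (h).
  - by move/fsetUidPl: hs => ->.
have [h' hin R] := P4 k lt.
exists h' => //; rewrite -rcons_cons !nth_rcons /= ltnS (ltnW lt) lt //.
Qed.

Lemma good_norm A B : good Sigma (A, B) -> has_normalized_derivation Sigma A B.
Proof.
move=> [p1 [p2 [H1 H2 [X r sub]]]].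
have [p4 [P4 L4]] := reach_p4 r.
exists p1, p2, p4; split => //.
rewrite L4; exists A, B, X; split => //.
by move/fsetUidPr: sub => ->.
Qed.

Lemma deriv_rcons s h : is_derivation Sigma s ->
  [\/ Sigma h, rule_Ax h,
      (exists j1 j2, [/\ j1 < size s, j2 < size s &
            rule_Cut (nth x0 s j1) (nth x0 s j2) h])
    | (exists j, j < size s /\ rule_Shf (nth x0 s j) h)] ->
  is_derivation Sigma (rcons s h).
Proof.
move=> D R k; rewrite size_rcons ltnS leq_eqVlt => /orP [/eqP ->|lt] /=.
  rewrite nth_rcons ltnn eqxx.
  case: R => [a|a|[j1 [j2 [l1 l2 C]]]|[j [l Sh]]].
  - exact: Or41.
  - exact: Or42.
  - by apply: Or43; exists j1, j2; rewrite !nth_rcons l1 l2.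
  - by apply: Or44; exists j; rewrite !nth_rcons l.
rewrite nth_rcons lt.
case: (D k lt) => [a|a|[j1 [j2 [l1 l2 C]]]|[j [l Sh]]].
- exact: Or41.
- exact: Or42.
- apply: Or43; exists j1, j2; rewrite !nth_rcons (ltn_trans l1 lt) (ltn_trans l2 lt) //.
- apply: Or44; exists j; rewrite !nth_rcons (ltn_trans l lt) //.
Qed.

Lemma deriv_cat s1 s2 : is_derivation Sigma s1 -> is_derivation Sigma s2 ->
  is_derivation Sigma (s1 ++ s2).
Proof.
move=> D1 D2 k; rewrite size_cat => hk /=.
rewrite nth_cat; case: ifP => lt.
  case: (D1 k lt) => [a|a|[j1 [j2 [l1 l2 C]]]|[j [l Sh]]].
  - exact: Or41.
  - exact: Or42.
  - apply: Or43; exists j1, j2; rewrite !nth_cat (ltn_trans l1 lt) (ltn_trans l2 lt) //.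
  - apply: Or44; exists j; rewrite !nth_cat (ltn_trans l lt) //.
have lt2 : k - size s1 < size s2 by move: lt hk; rewrite ltnNge => /negbFE h1 h2; rewrite ltn_subLR.
case: (D2 _ lt2) => [a|a|[j1 [j2 [l1 l2 C]]]|[j [l Sh]]].
- exact: Or41.
- exact: Or42.
- apply: Or43; exists (size s1 + j1)%N, (size s1 + j2)%N; split; try lia.
  rewrite !nth_cat !ltnNge !leq_addr /= !addKn //.
- apply: Or44; exists (size s1 + j)%N; split; first lia.
  rewrite !nth_cat !ltnNge !leq_addr /= !addKn //.
Qed.

Lemma prov_last s : s != [::] -> nth x0 s (size s).-1 = last x0 s.
Proof. by move=> _; rewrite nth_last. Qed.

Lemma prov_Sigma f : Sigma f -> provable Sigma f.
Proof.
move=> Sf; exists [:: f]; split => //; split => //.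
move=> [|k] //= _; exact: Or41.
Qed.

Lemma prov_Ax A B : provable Sigma (A `|` B, A).
Proof.
exists [:: (A `|` B, A)]; split => //; split => //.
move=> [|k] //= _; apply: Or42; by exists A, B.
Qed.

Lemma prov_Shf f g : provable Sigma f -> rule_Shf f g -> provable Sigma g.
Proof.
move=> [s [ne [D L]]] Sh; exists (rcons s g); split; first by case: (s).
split; last by rewrite last_rcons.
apply: deriv_rcons => //; apply: Or44; exists (size s).-1.
rewrite nth_last L; split => //; case: s ne {D L} => //= *; lia.
Qed.

Lemma prov_Cut f1 f2 g : provable Sigma f1 -> provable Sigma f2 ->
  rule_Cut f1 f2 g -> provable Sigma g.
Proof.
move=> [s1 [ne1 [D1 L1]]] [s2 [ne2 [D2 L2]]] C.
exists (rcons (s1 ++ s2) g); split; first by case: (s1 ++ s2).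
split; last by rewrite last_rcons.
apply: deriv_rcons; first exact: deriv_cat.
apply: Or43; exists (size s1).-1, (size s1 + (size s2).-1)%N.
have z1 : 0 < size s1 by case: (s1) ne1.
have z2 : 0 < size s2 by case: (s2) ne2.
rewrite size_cat; split; try lia.
rewrite !nth_cat (_ : (size s1).-1 < size s1 = true); last lia.
rewrite (_ : (size s1 + (size s2).-1 < size s1)%N = false); last lia.
by rewrite addKn !nth_last L1 L2.
Qed.

End T.

Section U.
Variable Y : finType.
Variable Sigma : theory Y.
Implicit Types (A B C D E X : {fset term Y}).

Lemma prov_cut A B C D : provable Sigma (A, B) -> provable Sigma (B `|` C, D) ->
  provable Sigma (A `|` C, D).
Proof. move=> p q; apply: prov_Cut p q _; by exists A, B, C, D. Qed.

Lemma prov_sub A X Z : provable Sigma (A, X) -> Z `<=` X -> provable Sigma (A, Z).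
Proof.
move=> p /fsetUidPr s.
have q := prov_Ax Sigma Z X; rewrite s -[X](fsetU0 X) in q.
by have := prov_cut p q; rewrite fsetU0.
Qed.

Lemma prov_Pro f g : provable Sigma f -> rule_Pro f g -> provable Sigma g.
Proof. move=> p [A [B [C [ef ->]]]]; subst f; apply: prov_sub p (fsubsetUl _ _). Qed.

Lemma prov_Acc f1 h g : provable Sigma f1 -> provable Sigma h -> rule_Acc f1 h g ->
  provable Sigma g.
Proof.
move=> p q [A [B [C [D [E [e1 e2 ->]]]]]]; subst f1 h.
have p1 := prov_sub q (fsubsetUl D E).
have p2 := prov_Ax Sigma (D `|` (B `|` C)) fset0; rewrite fsetU0 in p2.
have p3 := prov_cut p1 p2.
move/fsetUidPr: (fsubsetUr B C) => e; rewrite e -[B `|` C](fsetU0 (B `|` C)) in p3.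
have := prov_cut p p3; rewrite !fsetU0 => r.
by rewrite fsetUC.
Qed.

End U.

Theorem theorem10 (Y : finType) (HY : 0 < #|Y|) (Sigma : theory Y)
    (A B : {fset term Y}) :
  provable Sigma (A, B) <-> has_normalized_derivation Sigma A B.
Proof.
split.
- move=> [s [ne [D L]]].
  have z : (size s).-1 < size s by case: (s) ne.
  have := deriv_good D z; rewrite nth_last L; exact: good_norm.
- move=> [p1 [p2 [p4 [H1 H2 H4 HP]]]].
  have Hh : forall h, h \in p1 ++ p2 -> provable Sigma h.
    move=> h; rewrite mem_cat => /orP [/H1 /prov_Sigma //|/H2 [f fi Sh]].
    exact: prov_Shf (prov_Sigma (H1 _ fi)) Sh.
  have ch : forall k, k <= size p4 -> provable Sigma (nth (A, A) ((A, A) :: p4) k).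
    elim=> [_|k IH lt] /=.
      by have := prov_Ax Sigma A fset0; rewrite fsetU0.
    have [h hin R] := H4 k lt.
    exact: prov_Acc (IH (ltnW lt)) (Hh _ hin) R.
  apply: prov_Pro HP; rewrite (last_nth (A, A)); exact: ch.
Qed.
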